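(* Consider an instance with $n$ agents, $m$ divisible items and binary additive valuations (notation as in the context), and let $x$ be a stable fractional allocation with profile $(h_1,\dots,h_n)$. If $d\neq d'$ are two values both attained by coordinates of the profile (i.e. $\mathsf{layer}^*_d$ and $\mathsf{layer}^*_{d'}$ are two different nonempty layers), then $|d-d'|\ge 1/n^2$.
   Context: Agents $[n]$, items $[m]$; each agent $i$ has a set $L_i\subseteq[m]$ of liked items. A fractional allocation is $x=(x_{o,i})$ with $x_{o,i}\ge0$, $\sum_i x_{o,i}\le1$ for each item $o$; clean if $x_{o,i}=0$ for $o\notin L_i$; max-USW if it maximizes $\sum_i\sum_{o\in L_i}x_{o,i}$; allocations are clean and max-USW; profile $h_i=\sum_o x_{o,i}$. A transfer $u\to v$: distinct agents $u=i_1,\dots,i_k=v$ ($k\ge2$), items $o_l$ with $x_{o_l,i_l}>0$, $o_l\in L_{i_{l+1}}$, amount $0<\Delta\le\min_l x_{o_l,i_l}$, moving $\Delta$ of $o_l$ from $i_l$ to $i_{l+1}$; narrowing if $h_u-\Delta\ge h_v+\Delta$; $x$ is stable if it admits no narrowing transfer. For real $d$, $\mathsf{layer}^*_d=\{i:h_i=d\}$. *)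

(* Defs.v *)
From HB Require Import structures.
From mathcomp Require Import all_boot all_order all_algebra.
From mathcomp Require Import reals.
Set Implicit Arguments. Unset Strict Implicit. Unset Printing Implicit Defensive.
Import Order.TTheory GRing.Theory Num.Theory.
Local Open Scope ring_scope.

Section Alloc.
Variables (R : realType) (n m : nat).
(* agents 'I_n, items 'I_m, L i = set of items liked by agent i *)
Variable L : 'I_n -> {set 'I_m}.
(* x o i = fraction of item o given to agent i *)
Implicit Types x y : 'I_m -> 'I_n -> R.

Definition fractional x : Prop :=
  (forall o i, 0 <= x o i) /\ (forall o, \sum_(i < n) x o i <= 1).

Definition clean x : Prop := forall o i, o \notin L i -> x o i = 0.

Definition usw x : R := \sum_(i < n) \sum_(o in L i) x o i.

Definition max_usw x : Prop :=
  fractional x /\ forall y, fractional y -> usw y <= usw x.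

Definition allocation x : Prop := fractional x /\ clean x /\ max_usw x.

Definition profile x (i : 'I_n) : R := \sum_(o < m) x o i.

(* A narrowing transfer along distinct agents ag 0, ..., ag (k+1)
   (so at least 2 agents), with items it 0, ..., it k: item it l is held
   by ag l in amount >= Delta > 0 and liked by ag (l+1). *)
Definition narrowing_transfer x : Prop :=
  exists (k : nat) (ag : 'I_k.+2 -> 'I_n) (it : 'I_k.+1 -> 'I_m) (D : R),
    [/\ injective ag, 0 < D,
        (forall l : 'I_k.+1,
            0 < x (it l) (ag (widen_ord (leqnSn _) l)) /\
            D <= x (it l) (ag (widen_ord (leqnSn _) l)) /\
            it l \in L (ag (lift ord0 l)))
      & profile x (ag ord_max) + D <= profile x (ag ord0) - D].

Definition stable x : Prop := ~ narrowing_transfer x.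

Definition layer x (d : R) : {set 'I_n} := [set i | profile x i == d].
End Alloc.

(* Main.v *)
Require Import Defs.
From HB Require Import structures.
From mathcomp Require Import all_boot all_order all_algebra.
From mathcomp Require Import reals.
From mathcomp Require Import ring lra.
Import Order.TTheory GRing.Theory Num.Theory.
Local Open Scope ring_scope.

Lemma edge_le (R : realType) (n m : nat) (L : 'I_n -> {set 'I_m})
    (x : 'I_m -> 'I_n -> R) (o : 'I_m) (u v : 'I_n) :
  stable L x -> 0 < x o u -> o \in L v -> profile x u <= profile x v.
Proof.
move=> st xpos ov.
case: (eqVneq u v) => [->//|uv].
rewrite leNgt; apply/negP => hlt; apply: st.
pose ag := fun j : 'I_2 => if val j == 0%N then u else v.
pose D := Num.min (x o u) ((profile x u - profile x v) / 2).
exists 0%N, ag, (fun _ => o), D; split.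
- move=> j1 j2; rewrite /ag.
  case: j1 => [[|[|a]] Ha] //=; case: j2 => [[|[|b]] Hb] //= E;
    try (by apply/val_inj); by move: uv; rewrite E eqxx.
- rewrite /D lt_min xpos /=; lra.
- move=> l; rewrite /ag /=.
  rewrite (ord1 l) /= xpos; split=> //; split=> //; rewrite /D ge_min lexx //.
- have h1 : D <= (profile x u - profile x v) / 2 by rewrite /D ge_min lexx orbT.
  rewrite /ag /=; lra.
Qed.

Arguments edge_le {R n m L x o u v}.

Lemma full_item (R : realType) (n m : nat) (L : 'I_n -> {set 'I_m})
    (x : 'I_m -> 'I_n -> R) (o : 'I_m) (u : 'I_n) :
  allocation L x -> 0 < x o u -> \sum_(i < n) x o i = 1.
Proof.
move=> [[x0 x1] [cl [_ mx]]] xpos.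
apply/eqP; rewrite eq_le x1 /=; rewrite leNgt; apply/negP => hlt.
have uo : o \in L u.
  by case: (boolP (o \in L u)) => // /cl E; move: xpos; rewrite E ltxx.
pose e := 1 - \sum_(i < n) x o i.
pose y := fun o' i => x o' i + (if (o' == o) && (i == u) then e else 0).
have fy : fractional y.
  split.
  - move=> o' i; rewrite /y; case: ifP => _; last by rewrite addr0.
    apply: addr_ge0 => //; rewrite /e; lra.
  - move=> o'; rewrite /y big_split /=.
    case: (eqVneq o' o) => [->|ne].
    + rewrite -big_mkcond /= big_pred1_eq.
      rewrite /e; lra.
    + by rewrite /= big1_eq addr0.
have := mx y fy; rewrite /usw /y.
under eq_bigr do rewrite big_split /=.
have Hs : \sum_(i<n) \sum_(i0 in L i) (if (i0 == o) && (i == u) then e else 0) = e.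
  rewrite (bigD1 u) //= [X in _ + X]big1 => [|i /negPf iu]; last first.
    by rewrite big1 // => o' _; rewrite iu andbF.
  rewrite addr0 (bigD1 o) //= big1 ?addr0 ?eqxx // => o' /andP[_ /negPf ->] //.
rewrite big_split /= Hs /e; lra.
Qed.

Arguments full_item {R n m L x o u}.

Lemma upsum_nat (R : realType) (n m : nat) (L : 'I_n -> {set 'I_m})
    (x : 'I_m -> 'I_n -> R) (P : pred 'I_n) :
  allocation L x -> stable L x ->
  (forall u v, P u -> profile x u <= profile x v -> P v) ->
  exists k : nat, \sum_(i | P i) profile x i = k%:R.
Proof.
move=> al st Pup.
have [[x0 _] [cl _]] := al.
rewrite /profile exchange_big /=.
suff H : forall o : 'I_m, exists b : bool, \sum_(i | P i) x o i = (b : nat)%:R.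
  elim/big_rec: _ => [|o s _ [k ->]]; first by exists 0%N.
  have [b ->] := H o; exists (b + k)%N; by rewrite natrD.
move=> o.
case: (boolP [exists i, P i && (0 < x o i)]) => [/existsP [u /andP [Pu xu]]|].
- exists true; rewrite -(full_item al xu).
  rewrite [RHS](bigID P) /= [X in _ = _ + X]big1 ?addr0 // => i nPi.
  apply/eqP; rewrite eq_le x0 andbT leNgt; apply/negP => xi.
  have iL : o \in L i.
    by case: (boolP (o \in L i)) => // /cl E; move: xi; rewrite E ltxx.
  by move: nPi; rewrite (Pup u i Pu (edge_le st xu iL)).
- rewrite negb_exists => /forallP H; exists false.
  rewrite big1 // => i Pi; move: (H i); rewrite Pi /= => /negP H'.
  apply/eqP; rewrite eq_le x0 andbT leNgt; exact/negP.
Qed.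

Arguments upsum_nat {R n m L x} P.

Lemma layer_int (R : realType) (n m : nat) (L : 'I_n -> {set 'I_m})
    (x : 'I_m -> 'I_n -> R) (d : R) :
  allocation L x -> stable L x ->
  exists z : int, #|layer x d|%:R * d = z%:~R.
Proof.
move=> al st.
have [k1 E1] := upsum_nat (fun i => d <= profile x i) al st
  (fun u v (h1 : d <= profile x u) h2 => le_trans h1 h2).
have [k2 E2] := upsum_nat (fun i => d < profile x i) al st
  (fun u v (h1 : d < profile x u) h2 => lt_le_trans h1 h2).
exists (k1%:Z - k2%:Z).
rewrite intrB -!pmulrn -E1 -E2.
rewrite (bigID (fun i => profile x i == d)) /=.
have -> : \sum_(i | (d <= profile x i) && (profile x i == d)) profile x i
          = \sum_(i in layer x d) d.
  apply: eq_big => [i|i /andP [_ /eqP //]].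
  by rewrite inE; case: eqP => [->|]; rewrite ?lexx ?andbF.
have -> : \sum_(i | (d <= profile x i) && (profile x i != d)) profile x i
          = \sum_(i | d < profile x i) profile x i.
  by apply: eq_bigl => i; rewrite lt_def andbC eq_sym.
by rewrite sumr_const addrK mulr_natl.
Qed.

Arguments layer_int {R n m L x} d.

Theorem lemma8 (R : realType) (n m : nat) (L : 'I_n -> {set 'I_m})
    (x : 'I_m -> 'I_n -> R) (d d' : R) :
  allocation L x -> stable L x ->
  layer x d != set0 -> layer x d' != set0 -> d != d' ->
  (n%:R ^+ 2)^-1 <= `|d - d'|.
Proof.
move=> al st ne ne' dd.
have [z Ez] := layer_int d al st.
have [z' Ez'] := layer_int d' al st.
set c := #|layer x d| in Ez; set c' := #|layer x d'| in Ez'.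
have c0 : (0 < c)%N by rewrite card_gt0.
have c0' : (0 < c')%N by rewrite card_gt0.
have cn : (c <= n)%N by rewrite /c; apply: leq_trans (max_card _) _; rewrite card_ord.
have cn' : (c' <= n)%N by rewrite /c'; apply: leq_trans (max_card _) _; rewrite card_ord.
set w : int := z * c'%:Z - z' * c%:Z.
have Ew : c%:R * c'%:R * (d - d') = w%:~R :> R.
  rewrite /w intrB !intrM -!pmulrn -Ez -Ez' /=; ring.
have w0 : w != 0.
  apply/eqP => w0; move: Ew; rewrite w0 mulr0z => /eqP.
  rewrite mulf_eq0 subr_eq0 (negPf dd) orbF mulf_eq0 !pnatr_eq0.
  by rewrite !eqn0Ngt c0 c0'.
have w1 : 1 <= `|w%:~R : R|.
  by rewrite -intr_norm ler1z -gtz0_ge1 normr_gt0.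
have cpos : (0 : R) < c%:R * c'%:R by rewrite mulr_gt0 // ltr0n.
have ccn : c%:R * c'%:R <= (n%:R ^+ 2 : R).
  by rewrite expr2 ler_pM ?ler_nat.
rewrite -Ew normrM (ger0_norm (ltW cpos)) in w1.
have hd : 0 <= `|d - d'| by [].
have np : (0 : R) < n%:R ^+ 2 := lt_le_trans cpos ccn.
rewrite -(ler_pM2l np) mulfV ?gt_eqF //.
set N := n%:R ^+ 2 in np ccn *; set a := c%:R * c'%:R in cpos ccn w1 *.
nra.
Qed.
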